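(* Let $R$ be a binary relation on a set $A$. Then (1) $\mathbf{Inc}(R)$ implies $\mathbf{RP}(R)$, and (2) $\mathbf{RP}(R)$ holds if and only if $\mathbf{RP}^{-}(R)$ holds. (Constructively.)
   Context: Work in constructive (intuitionistic) logic / Martin-Löf type theory without excluded middle or other axioms. Let $R$ be a binary relation on a set $A$; write $a\to b$ for $R\,a\,b$ and $\to^*$ for its reflexive–transitive closure. A sequence is a function $s:\mathbb{N}\to A$; it is $R$-increasing if $s(k)\to s(k+1)$ for all $k$. An element $b$ is an $s$-bound if $s(i)\to^* b$ for all $i$; $s$ is bounded if some $s$-bound exists. $\mathbf{Inc}(R)$: there is a function $|\cdot|:A\to\mathbb{N}$ with $a\to b \Rightarrow |a|<|b|$ for all $a,b$. $\mathbf{RP}(R)$: for every bounded $R$-increasing sequence $s$ there is $i\in\mathbb{N}$ such that for all $x\in A$, $s(i)\to^* x$ implies $x\to^* s(i)$. $\mathbf{RP}^{-}(R)$: for every $R$-increasing sequence $s$ and every $s$-bound $b$ there is $i\in\mathbb{N}$ with $b\to^* s(i)$. *)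

(* Defs.v *)
From Stdlib Require Import Relations Arith.

Section RPdefs.
Context {A : Type} (R : A -> A -> Prop).

Definition rt : A -> A -> Prop := clos_refl_trans A R.

Definition R_increasing (s : nat -> A) : Prop := forall k, R (s k) (s (S k)).

Definition is_bound (s : nat -> A) (b : A) : Prop := forall i, rt (s i) b.

Definition bounded (s : nat -> A) : Prop := exists b, is_bound s b.

Definition Inc : Prop :=
  exists f : A -> nat, forall a b, R a b -> f a < f b.

Definition RP : Prop :=
  forall s : nat -> A, bounded s -> R_increasing s ->
    exists i, forall x, rt (s i) x -> rt x (s i).

Definition RPminus : Prop :=
  forall s : nat -> A, R_increasing s -> forall b, is_bound s b ->
    exists i, rt b (s i).
End RPdefs.

(* Main.v *)
Require Import Defs.
From Stdlib Require Import Relations Arith Lia.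

Theorem mainTheorem2 (A : Type) (R : A -> A -> Prop) :
  (Inc R -> RP R) /\ (RP R <-> RPminus R).
Proof.
  split; [|split].
  - intros [f Hf] s [b Hb] Hinc.
    assert (Hrt : forall a c, rt R a c -> f a <= f c).
    { intros a c H; induction H; [apply Nat.lt_le_incl, Hf; assumption| lia | lia]. }
    assert (Hk : forall k, k <= f (s k)).
    { induction k; [lia|]. specialize (Hf _ _ (Hinc k)); lia. }
    specialize (Hb (S (f b))). apply Hrt in Hb. specialize (Hk (S (f b))). lia.
  - intros HRP s Hinc b Hb.
    destruct (HRP s (ex_intro _ b Hb) Hinc) as [i Hi].
    exists i. apply Hi, Hb.
  - intros HM s [b Hb] Hinc.
    destruct (HM s Hinc b Hb) as [i Hi].
    exists i. intros x Hx.
    assert (Hxb : is_bound R s x).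
    { intro j. eapply rt_trans; [apply Hb|]. eapply rt_trans; eassumption. }
    destruct (HM s Hinc x Hxb) as [j Hj].
    eapply rt_trans; [exact Hj|]. eapply rt_trans; [apply Hb|exact Hi].
Qed.
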